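(* Let $q\in\{2,4\}$ and let $n,\kappa$ be integers with $1\le \kappa<n$. Let $A_{\kappa\text{-WMU},q,n}$ denote the maximum size of a $\kappa$-weakly mutually uncorrelated code $\mathcal{C}\subseteq \mathbb{F}_q^n$. Then \[ c_q\,\frac{q^{n}}{n-\kappa+1}\le A_{\kappa\text{-WMU},q,n}\le \frac{q^{n}}{n-\kappa+1},\qquad\text{where } c_q=\frac{(q-1)^2(2q-1)}{4q^4}. \]
   Context: $\mathbb{F}_q$ is the finite field with $q$ elements. For a sequence $\mathbf{a}=(a_1,\dots,a_n)$ write $\mathbf{a}_i^j=(a_i,\dots,a_j)$ for $i\le j$. A code $\mathcal{C}\subseteq\mathbb{F}_q^n$ is $\kappa$-weakly mutually uncorrelated ($\kappa$-WMU), for $1\le\kappa<n$, if for all (not necessarily distinct) $\mathbf{a},\mathbf{b}\in\mathcal{C}$ and all $l$ with $\kappa\le l<n$ one has $\mathbf{a}_1^{l}\neq \mathbf{b}_{n-l+1}^{n}$, i.e. no proper prefix of length at least $\kappa$ of a codeword equals a suffix of a codeword (including itself). *)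

(* Defs.v *)
From mathcomp Require Import all_boot all_order all_algebra.
Set Implicit Arguments. Unset Strict Implicit. Unset Printing Implicit Defensive.

(* Words of length n over alphabet T are n.-tuples; positions are 1-based in
   the paper: a_1^l = take l a, a_{n-l+1}^n = drop (n - l) a. *)

Definition WMU (T : finType) (n kappa : nat) (C : {set n.-tuple T}) : bool :=
  [forall a in C, forall b in C, forall l : 'I_n,
     (kappa <= l) ==> (take l (val a) != drop (n - l) (val b))].

Definition A_WMU (T : finType) (n kappa : nat) : nat :=
  \max_(C : {set n.-tuple T} | WMU kappa C) #|C|.

(* Main.v *)
Require Import Defs.
From mathcomp Require Import all_boot all_order all_algebra zify ring lra.
Set Implicit Arguments. Unset Strict Implicit. Unset Printing Implicit Defensive.
Import Order.TTheory GRing.Theory Num.Theory.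
Local Open Scope ring_scope.

Lemma card_tfam (T : finType) n (g : nat -> {pred T}) :
  #|[set t : n.-tuple T | [forall i : 'I_n, tnth t i \in g i]]| = (\prod_(i < n) #|g i|)%N.
Proof.
pose h (f : {ffun 'I_n -> T}) : n.-tuple T := [tuple f i | i < n].
have hinj : injective h.
  move=> f1 f2 /(congr1 (fun t => tnth t)) E; apply/ffunP => i.
  by have := congr1 (fun F => F i) E; rewrite /h !tnth_mktuple.
have -> : [set t : n.-tuple T | [forall i : 'I_n, tnth t i \in g i]] =
          h @: [set f | f \in family (fun i : 'I_n => g i)].
  apply/setP => t; rewrite inE; apply/idP/idP.
  - move=> /forallP Ht; apply/imsetP; exists [ffun i => tnth t i].
      by rewrite inE; apply/familyP => i; rewrite ffunE.
    by apply: eq_from_tnth => i; rewrite tnth_mktuple ffunE.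
  - case/imsetP => f; rewrite inE => /familyP Hf ->.
    by apply/forallP => i; rewrite tnth_mktuple.
by rewrite card_imset // cardsE card_family foldrE big_map big_enum.
Qed.

Section LB.
Variables (F : finFieldType) (n k m : nat).

Definition gp (s i : nat) : {pred F} :=
  if (s <= i < s + k)%N then pred1 0 else if i == (s + k)%N then pred1 1 else predT.
Definition gbase (i : nat) : {pred F} :=
  if (i <= k)%N then gp 0 i else if i == n.-1 then predC1 0 else predT.
Definition gbad (s i : nat) : {pred F} :=
  if (i <= k)%N then gp 0 i else gp s i.
Definition Base := [set t : n.-tuple F | [forall i : 'I_n, tnth t i \in gbase i]].
Definition Pat s (t : n.-tuple F) := [forall i : 'I_n, tnth t i \in gp s i].
Definition C0 := [set t in Base | [forall s : 'I_n, ((k < s <= m) && (s + k < n))%N ==> ~~ Pat s t]].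
Definition Bad s := [set t : n.-tuple F | [forall i : 'I_n, tnth t i \in gbad s i]].

Lemma card_gp0 i : (i <= k)%N -> #|gp 0 i| = 1%N.
Proof.
move=> hi; rewrite /gp /=; case: ifP => H1; first by rewrite card1.
case: ifP => H2; first by rewrite card1.
exfalso; move: H1 H2; rewrite add0n /=; move=> /negbT H1 /negbT H2; lia.
Qed.

Lemma Base_card : (k.+2 <= n)%N -> #|Base| = ((#|F| - 1) * #|F| ^ (n - k.+2))%N.
Proof.
move=> hn; rewrite card_tfam.
rewrite (eq_bigr (fun i : 'I_n => if (i <= k)%N then 1%N else if i == n.-1 :> nat then (#|F| - 1)%N else #|F|)); last first.
  move=> i _; rewrite /gbase; case: ifP => H; first by rewrite card_gp0.
  case: ifP => _; last by [].
  by rewrite cardC1 subn1.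
rewrite -(big_mkord xpredT (fun i => if (i <= k)%N then 1%N else if i == n.-1 then (#|F| - 1)%N else #|F|)).
rewrite (big_cat_nat _ (n := k.+1)) //; last by lia.
rewrite (big_cat_nat _ (m := k.+1) (n := n.-1)) //; try lia.
rewrite (eq_big_nat _ _ (F2 := fun _ => 1%N)); last first.
  move=> i Hi; case: ifP => [/idP ?|/negbT ?] //; lia.
rewrite (eq_big_nat _ _ (m := k.+1) (n := n.-1) (F2 := fun _ => #|F|)) /=; last first.
  by move=> i Hi; case: ifP => [/idP ?|/negbT ?]; [lia|]; case: ifP => [/eqP ?|/negbT ?] //; lia.
rewrite (eq_big_nat _ _ (m := n.-1) (n := n) (F2 := fun _ => (#|F| - 1)%N)) /=; last first.
  by move=> i Hi; case: ifP => [/idP ?|/negbT ?]; [lia|]; case: ifP => [/eqP ?|/negbT ?] //; lia.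
rewrite !prod_nat_const_nat.
have -> : (n - n.-1 = 1)%N by lia.
rewrite exp1n mul1n expn1 mulnC; congr (_ * _)%N; congr (_ ^ _)%N; lia.
Qed.

Lemma card_gp s i : #|gp s i| = if (s <= i <= s + k)%N then 1%N else #|F|.
Proof.
rewrite /gp; case: ifP => [/idP H1|/negbT H1]; first by rewrite card1; case: ifP => //; lia.
case: ifP => [/eqP H2|/negbT H2]; first by rewrite card1; case: ifP => //; lia.
by case: ifP => //; lia.
Qed.

Lemma Bad_card s : (k < s)%N -> (s + k < n)%N -> #|Bad s| = (#|F| ^ (n - (k.+1 + k.+1)))%N.
Proof.
move=> h1 h2; rewrite card_tfam.
rewrite (eq_bigr (fun i : 'I_n => if (i <= k)%N then 1%N else if (s <= i <= s + k)%N then 1%N else #|F|)); last first.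
  move=> i _; rewrite /gbad; case: ifP => H; first by rewrite card_gp0.
  by rewrite card_gp.
pose G := fun i : nat => if (i <= k)%N then 1%N else if (s <= i <= s + k)%N then 1%N else #|F|.
rewrite -(big_mkord xpredT G).
rewrite (big_cat_nat _ (n := k.+1)) //; last by lia.
rewrite (big_cat_nat _ (m := k.+1) (n := s)) //; try lia.
rewrite (big_cat_nat _ (m := s) (n := (s + k).+1)) //; try lia.
rewrite (eq_big_nat _ _ (m := 0) (n := k.+1) (F2 := fun _ => 1%N)); last first.
  by move=> i Hi; rewrite /G; case: ifP => [/idP ?|/negbT ?] //; lia.
rewrite (eq_big_nat _ _ (m := k.+1) (n := s) (F2 := fun _ => #|F|)); last first.
  by move=> i Hi; rewrite /G; case: ifP => [/idP ?|/negbT ?]; [lia|]; case: ifP => [/idP ?|/negbT ?] //; lia.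
rewrite (eq_big_nat _ _ (m := s) (n := (s + k).+1) (F2 := fun _ => 1%N)); last first.
  by move=> i Hi; rewrite /G; case: ifP => [/idP ?|/negbT ?]; [lia|]; case: ifP => [/idP ?|/negbT ?] //; lia.
rewrite (eq_big_nat _ _ (m := (s + k).+1) (n := n) (F2 := fun _ => #|F|)); last first.
  by move=> i Hi; rewrite /G; case: ifP => [/idP ?|/negbT ?]; [lia|]; case: ifP => [/idP ?|/negbT ?] //; lia.
rewrite !prod_nat_const_nat !exp1n.
change ((1 * (#|F| ^ (s - k.+1) * (1 * #|F| ^ (n - (s + k).+1))))%N = (#|F| ^ (n - (k.+1 + k.+1)))%N).
rewrite !mul1n -expnD; congr (_ ^ _)%N; lia.
Qed.

Lemma inBase t i : t \in Base -> (i < n)%N -> nth 0 (val t) i \in gbase i.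
Proof.
move=> /[!inE] /forallP H hi; have := H (Ordinal hi).
by rewrite (tnth_nth 0).
Qed.

Lemma C0_WMU kappa : (1 <= kappa)%N -> m = (n - kappa)%N -> (k.+2 <= n)%N -> WMU kappa C0.
Proof.
move=> k1 em kn.
apply/forallP => a; apply/implyP => /setIdP [Ha _].
apply/forallP => b; apply/implyP => /setIdP [Hb Hnb].
apply/forallP => l; apply/implyP => Hl; apply/eqP => E.
have hl := ltn_ord l.
have sa := size_tuple a; have sb := size_tuple b.
have R : forall j, (j < l)%N -> nth 0 (val a) j = nth 0 (val b) (n - l + j).
  move=> j hj.
  have := congr1 (fun x => nth 0 x j) E => /=.
  by rewrite nth_take // nth_drop.
case: (leqP l k) => hlk.
  have := inBase Ha (i := l.-1) ltac:(lia).
  rewrite /gbase /gp; case: ifP => [_|/negbT ?]; last lia.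
  case: ifP => [_|/negbT ?]; last lia.
  rewrite inE R; last lia.
  have -> : (n - l + l.-1 = n.-1)%N by lia.
  have := inBase Hb (i := n.-1) ltac:(lia).
  rewrite /gbase; case: ifP => [/idP ?|_]; first lia.
  by rewrite eqxx inE => /negPf ->.
have bk : nth 0 (val b) k = 1.
  have := inBase Hb (i := k) ltac:(lia).
  rewrite /gbase /gp leqnn; case: ifP => [/idP ?|_]; first lia.
  by rewrite add0n eqxx inE => /eqP.
have aj : forall j, (j < k)%N -> nth 0 (val a) j = 0.
  move=> j hj; have := inBase Ha (i := j) ltac:(lia).
  rewrite /gbase /gp; case: ifP => [_|/negbT ?]; last lia.
  by case: ifP => [_|/negbT ?]; [rewrite inE => /eqP|lia].
have ak : nth 0 (val a) k = 1.
  have := inBase Ha (i := k) ltac:(lia).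
  rewrite /gbase /gp leqnn; case: ifP => [/idP ?|_]; first lia.
  by rewrite add0n eqxx inE => /eqP.
case: (leqP (n - l) k) => hs.
  have := R (k - (n - l))%N ltac:(lia).
  rewrite aj; last lia.
  have -> : (n - l + (k - (n - l)) = k)%N by lia.
  rewrite bk => /eqP; by rewrite eq_sym oner_eq0.
have hsn : (n - l < n)%N by lia.
move/forallP: Hnb => /(_ (Ordinal hsn)) /=.
have -> : ((k < n - l <= m) && (n - l + k < n))%N by lia.
move/negP; apply; apply/forallP => i.
rewrite (tnth_nth 0) /gp.
case: ifP => [/idP H1|/negbT H1].
  rewrite inE -(subnKC (proj1 (andP H1))) -R; last lia.
  by rewrite aj //; lia.
case: ifP => [/eqP H2|//].
rewrite inE H2 -R; last lia.
by rewrite ak.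
Qed.

Lemma card_bigcup_le (I : finType) (P : pred I) (A : I -> {set n.-tuple F}) :
  (#|\bigcup_(i | P i) A i| <= \sum_(i | P i) #|A i|)%N.
Proof.
apply: (big_ind2 (fun (S : {set n.-tuple F}) x => #|S| <= x)%N).
- by rewrite cards0.
- move=> S1 x1 S2 x2 h1 h2; apply: leq_trans (leq_card_setU S1 S2) _.
  exact: leq_add.
- by [].
Qed.

Lemma sum_range_exact c N :
  (\sum_(0 <= s < N) (if (k < s <= m)%N then c else 0%N) = (minn N m.+1 - k.+1) * c)%N.
Proof.
elim: N => [|N IH]; first by rewrite big_nil; have -> : (minn 0 m.+1 - k.+1 = 0)%N by lia.
rewrite big_nat_recr //= IH; case: ifP => [/idP H|/negbT H].
  have -> : (minn N.+1 m.+1 - k.+1 = (minn N m.+1 - k.+1).+1)%N by lia.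
  by rewrite mulSn addnC.
have -> : (minn N.+1 m.+1 - k.+1 = minn N m.+1 - k.+1)%N by lia.
by rewrite addn0.
Qed.

Lemma C0_card : (k.+2 <= n)%N ->
  ((#|F| - 1) * #|F| ^ (n - k.+2) * #|F| ^ k <= #|C0| * #|F| ^ k + (m - k) * #|F| ^ (n - k.+2))%N.
Proof.
move=> kn.
pose P := fun s : 'I_n => ((k < s <= m) && (s + k < n))%N.
pose U := \bigcup_(s | P s) Bad s.
have sub : Base \subset C0 :|: U.
  apply/subsetP => t Ht; rewrite inE.
  case Hc: (t \in C0); first by [].
  move: Hc; rewrite inE Ht /= => /negbT; rewrite negb_forall => /existsP [s].
  rewrite negb_imply negbK => /andP [Ps Pt].
  apply/bigcupP; exists s => //.
  rewrite inE; apply/forallP => i.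
  move/forallP: Pt => /(_ i); move: Ht; rewrite inE => /forallP /(_ i).
  by rewrite /gbad /gbase; case: ifP.
have h1 : (#|Base| <= #|C0| + #|U|)%N.
  apply: leq_trans (subset_leq_card sub) _; exact: leq_card_setU.
have h2 : (#|U| * #|F| ^ k <= (m - k) * #|F| ^ (n - k.+2))%N.
  rewrite /U; apply: leq_trans (leq_mul (card_bigcup_le P Bad) (leqnn _)) _.
  rewrite big_distrl /=.
  rewrite (eq_bigr (fun _ => #|F| ^ (n - k.+2))%N); last first.
    move=> s /andP [H1 H2]; rewrite Bad_card; [|lia|lia].
    by rewrite -expnD; congr (_ ^ _)%N; lia.
  rewrite big_mkcond /=.
  apply: leq_trans (_ : \sum_(s < n) (if (k < s <= m)%N then #|F| ^ (n - k.+2) else 0) <= _)%N.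
    by apply: leq_sum => s _; rewrite /P; case: ifP => [/andP [-> _]|].
  rewrite -(big_mkord xpredT (fun s => if (k < s <= m)%N then #|F| ^ (n - k.+2) else 0))%N.
  rewrite sum_range_exact; apply: leq_mul => //; lia.
rewrite Base_card // in h1.
apply: leq_trans (leq_mul h1 (leqnn (#|F| ^ k))) _.
by rewrite mulnDl leq_add2l.
Qed.

End LB.

Lemma WMU_rot (T : finType) n kappa (C : {set n.-tuple T}) (a b : n.-tuple T) j j' :
  WMU kappa C -> a \in C -> b \in C -> (j <= j')%N -> (j' <= n - kappa)%N -> (kappa <= n)%N ->
  rot j (val a) = rot j' (val b) -> a = b /\ j = j'.
Proof.
move=> W Ha Hb jj' j'n kn E.
have sa := size_tuple a; have sb := size_tuple b.
case: (ltnP j j') => hj; last first.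
  have ej : j = j' by lia.
  subst j'; split => //; apply: val_inj; exact: (rot_inj E).
exfalso.
pose e := (j' - j)%N.
have : rot j' (val b) = rot j (rot e (val b)) by rewrite -rotD ?sb; [congr rot; lia | lia].
rewrite -E => /rot_inj Eab.
have hl : (n - e < n)%N by lia.
move/forallP: W => /(_ a); rewrite Ha /= => /forallP /(_ b); rewrite Hb /=.
move=> /forallP /(_ (Ordinal hl)) /=.
have -> : (kappa <= n - e)%N by lia.
rewrite /= Eab /rot take_size_cat ?size_drop ?sb //.
have -> : (n - (n - e) = e)%N by lia.
by rewrite eqxx.
Qed.

Lemma WMU_card (T : finType) n kappa (C : {set n.-tuple T}) :
  (kappa <= n)%N -> WMU kappa C -> (#|C| * (n - kappa + 1) <= #|T| ^ n)%N.
Proof.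
move=> kn W.
pose f (p : n.-tuple T * 'I_(n - kappa + 1)) : n.-tuple T := [tuple of rot p.2 (val p.1)].
have finj : {in setX C [set: 'I_(n - kappa + 1)] &, injective f}.
  move=> [a j] [b j']; rewrite !inE /= => /andP [Ha _] /andP [Hb _].
  move=> /(congr1 val) /= E.
  have hj := ltn_ord j; have hj' := ltn_ord j'.
  case: (leqP j j') => h.
    have [-> ej] := WMU_rot W Ha Hb h ltac:(lia) kn E.
    by congr pair; apply: val_inj.
  have [-> ej] := WMU_rot W Hb Ha (ltnW h) ltac:(lia) kn (esym E).
  by congr pair; apply: val_inj.
have := card_in_imset finj; rewrite cardsX cardsT card_ord => <-; rewrite -card_tuple.
exact: max_card.
Qed.

Lemma arith_gen (c a N0 Q y m : rat) : 0 < Q -> 0 < y -> 0 <= m ->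
  c * y * y <= (a * y - m) * (m + 1) -> 0 <= a * y - m ->
  a * Q * y <= N0 * y + m * Q ->
  c * (Q * y / (m + 1)) <= N0.
Proof.
move=> hQ hy hm H1 H2 H3.
rewrite mulrA ler_pdivrMr; last lra.
rewrite -(ler_pM2r hy).
have H4 : (a * y - m) * Q <= N0 * y by lra.
have H5 : (a * y - m) * Q * (m + 1) <= N0 * y * (m + 1) by apply: ler_wpM2r; lra.
have H6 : c * y * y * Q <= (a * y - m) * (m + 1) * Q by apply: ler_wpM2r; lra.

lra.
Qed.

Lemma arith2 (N0 Q y m : rat) : 0 < Q -> 0 < y -> 1 <= m -> 2 * m <= y -> y < 4 * m ->
  Q * y <= N0 * y + m * Q ->
  ((2%:R - 1) ^+ 2 * (2 * 2%:R - 1)) / (4 * 2%:R ^+ 4) * (Q * 2%:R ^+ 2 * y / (m + 1)) <= N0.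
Proof.
move=> hQ hy hm h1 h2 H.
have -> : ((2%:R - 1) ^+ 2 * (2 * 2%:R - 1)) / (4 * 2%:R ^+ 4) * (Q * 2%:R ^+ 2 * y / (m + 1))
   = (3/16) * (Q * y / (m + 1)) :> rat.
  by field; lra.
have H1 : 3 / 16 * y * y <= (1 * y - m) * (m + 1).
have P1 : (3 * y - 4 * m) * (y - 4 * m) <= 0.
    apply: mulr_ge0_le0; lra.
  have P2 : (1 * y - m) * m <= (1 * y - m) * (m + 1).
    by rewrite ler_wpM2l; lra. lra.
apply: (arith_gen hQ hy _ H1); lra.
Qed.

Lemma arith4 (N0 Q y m : rat) : 0 < Q -> 0 < y -> 1 <= m -> 2 * m <= 4 * y -> y < 2 * m ->
  3 * Q * y <= N0 * y + m * Q ->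
  ((4%:R - 1) ^+ 2 * (2 * 4%:R - 1)) / (4 * 4%:R ^+ 4) * (Q * 4%:R ^+ 2 * y / (m + 1)) <= N0.
Proof.
move=> hQ hy hm h1 h2 H.
have -> : ((4%:R - 1) ^+ 2 * (2 * 4%:R - 1)) / (4 * 4%:R ^+ 4) * (Q * 4%:R ^+ 2 * y / (m + 1))
   = (63/64) * (Q * y / (m + 1)) :> rat.
  by field; lra.
have H1 : 63 / 64 * y * y <= (3 * y - m) * (m + 1).
have P1 : (21 * y - 8 * m) * (3 * y - 8 * m) <= 0.
    apply: mulr_ge0_le0; lra.
  have P2 : (3 * y - m) * m <= (3 * y - m) * (m + 1).
    by rewrite ler_wpM2l; lra. lra.
apply: (arith_gen hQ hy _ H1); lra.
Qed.

Lemma arith_small (P m : rat) : 1 <= m -> P < 8 * m ->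
  ((2%:R - 1) ^+ 2 * (2 * 2%:R - 1)) / (4 * 2%:R ^+ 4) * (P / (m + 1)) <= 1.
Proof.
move=> hm hP.
have -> : ((2%:R - 1) ^+ 2 * (2 * 2%:R - 1)) / (4 * 2%:R ^+ 4) * (P / (m + 1))
   = (3/64) * P / (m + 1) :> rat.
  by field; lra.
rewrite ler_pdivrMr; lra.
Qed.


Lemma single_WMU (F : finFieldType) n kappa : (1 <= kappa)%N -> (0 < n)%N ->
  WMU kappa [set [tuple (if i == 0 :> nat then 1 else 0 : F) | i < n]].
Proof.
move=> k1 n0; set w := [tuple _ | i < n].
apply/forallP => a; apply/implyP => /set1P ->.
apply/forallP => b; apply/implyP => /set1P ->.
apply/forallP => l; apply/implyP => Hl; apply/eqP => E.
have hl := ltn_ord l.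
have := congr1 (fun x => nth 0 x 0) E => /=.
rewrite nth_take; last lia.
rewrite nth_drop addn0.
have h0 : (0 < n)%N by [].
have h1 : (n - l < n)%N by lia.
rewrite -(tnth_nth 0 w (Ordinal h0)) -(tnth_nth 0 w (Ordinal h1)) !tnth_mktuple /=.
have -> : (n - l == 0)%N = false by apply/negbTE; lia.
by move/eqP; rewrite oner_eq0.
Qed.

Theorem theorem3 (F : finFieldType) (q n kappa : nat) :
  #|F| = q -> (q = 2 \/ q = 4)%N -> (1 <= kappa)%N -> (kappa < n)%N ->
  let c_q : rat := ((q%:R - 1) ^+ 2 * (2 * q%:R - 1)) / (4 * q%:R ^+ 4) in
  c_q * (q%:R ^+ n / (n - kappa + 1)%N%:R) <= (A_WMU F n kappa)%:R
  /\ (A_WMU F n kappa)%:R <= q%:R ^+ n / (n - kappa + 1)%N%:R :> rat.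
Proof.
move=> hF hq k1 kn c_q.
have q1 : (1 < q)%N by case: hq => ->.
have d0 : (0 < n - kappa + 1)%N by lia.
split; last first.
  have Hup : (A_WMU F n kappa * (n - kappa + 1) <= q ^ n)%N.
    rewrite -leq_divRL //; apply/bigmax_leqP => C W.
    rewrite leq_divRL // -hF; apply: WMU_card => //; lia.
  rewrite ler_pdivlMr ?ltr0n // -natrX -natrM ler_nat //.
set m := (n - kappa)%N.
have m1 : (1 <= m)%N by rewrite /m; lia.
set M := (8 %/ q * m)%N.
have hM : M = (if q == 2 then 4 * m else 2 * m)%N by rewrite /M; case: hq => ->.
have M1 : (0 < M.-1)%N by rewrite hM; case: ifP => _; lia.
set k := trunc_log q M.-1.
have hk1 : (q ^ k <= M.-1)%N by apply: trunc_logP.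
have hk2 : (M.-1 < q ^ k.+1)%N by apply: trunc_log_ltn.
rewrite natrD.
case: (leqP k.+2 n) => hkn.
  have W := @C0_WMU F n k m kappa k1 erefl hkn.
  have Hc := @C0_card F n k m hkn.
  have HA : (#|C0 F n k m| <= A_WMU F n kappa)%N by rewrite /A_WMU; exact: (@leq_bigmax_cond _ (fun C : {set n.-tuple F} => WMU kappa C) (fun C : {set n.-tuple F} => #|C|) _ W).
  apply: le_trans (_ : (#|C0 F n k m|)%:R <= _); last by rewrite ler_nat.
  have Hc2 : ((q - 1) * q ^ (n - k.+2) * q ^ k <= #|C0 F n k m| * q ^ k + m * q ^ (n - k.+2))%N.
    rewrite -hF; apply: leq_trans Hc _; rewrite leq_add2l; apply: leq_mul => //; lia.
  have Hr : (((q - 1) * q ^ (n - k.+2) * q ^ k)%:R <= (#|C0 F n k m| * q ^ k + m * q ^ (n - k.+2))%:R :> rat)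
    by rewrite ler_nat.
  rewrite !natrD !natrM !natrX in Hr.
  have en : q%:R ^+ n = q%:R ^+ (n - k.+2) * q%:R ^+ 2 * q%:R ^+ k :> rat.
    by rewrite -!exprD; congr (_ ^+ _); lia.
  rewrite /c_q en.
  have hQ : 0 < q%:R ^+ (n - k.+2) :> rat by rewrite exprn_gt0 // ltr0n; lia.
  have hy : 0 < q%:R ^+ k :> rat by rewrite exprn_gt0 // ltr0n; lia.
  have hm : 1 <= m%:R :> rat by rewrite ler1n.
  move: hk1 hk2 Hr; rewrite hM.
  case: hq => hq; rewrite hq; move=> hk1 hk2 Hr; rewrite hq in hQ hy hk1 hk2 Hr *.
    rewrite eqxx in hk1 hk2.
    have a1 : (2 * m <= 2 ^ k)%N by rewrite expnS in hk2; lia.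
    have a2 : (2 ^ k < 4 * m)%N by lia.
    have b1 : 2 * m%:R <= 2%:R ^+ k :> rat by move: a1; rewrite -(ler_nat rat) !natrM natrX.
    have b2 : 2%:R ^+ k < 4 * m%:R :> rat by move: a2; rewrite -(ltr_nat rat) !natrM natrX.
    apply: arith2 => //.
    move: Hr; have -> : (2 - 1 = 1)%N by []. by rewrite mul1r.
  have e42 : (4 == 2)%N = false by [].
  rewrite e42 in hk1 hk2.
  have a1 : (2 * m <= 4 * 4 ^ k)%N by rewrite expnS in hk2; lia.
  have a2 : (4 ^ k < 2 * m)%N by lia.
  have b1 : 2 * m%:R <= 4 * 4%:R ^+ k :> rat by move: a1; rewrite -(ler_nat rat) !natrM natrX.
  have b2 : 4%:R ^+ k < 2 * m%:R :> rat by move: a2; rewrite -(ltr_nat rat) !natrM natrX.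
  apply: arith4 => //.
have hn0 : (0 < n)%N by lia.
have HA : (1 <= A_WMU F n kappa)%N.
  have W := single_WMU F k1 hn0.
  have := @leq_bigmax_cond _ (fun C : {set n.-tuple F} => WMU kappa C) (fun C : {set n.-tuple F} => #|C|) _ W.
  by rewrite cards1.
apply: le_trans (_ : 1 <= _); last by rewrite ler1n.
rewrite /c_q; move: hk1 hk2; rewrite hM.
case: hq => hq; rewrite hq => hk1 hk2.
  rewrite eqxx in hk1 hk2.
  have a1 : (2 ^ n < 8 * m)%N.
    have : (2 ^ n <= 2 ^ k.+1)%N by apply: leq_pexp2l.
    have h4 : (2 ^ k < 4 * m)%N by apply: leq_ltn_trans hk1 _; rewrite ltn_predL; lia.
    rewrite expnS; move: h4; generalize (2 ^ k)%N (2 ^ n)%N => a b; lia.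
  apply: arith_small => //; first by rewrite ler1n.
  by move: a1; rewrite -(ltr_nat rat) !natrM natrX.
have e42 : (4 == 2)%N = false by [].
rewrite e42 in hk1 hk2.
exfalso.
have e1 : (4 ^ (n - 1) <= 4 ^ k)%N by apply: leq_pexp2l => //; lia.
have e2 : (2 * (n - 1) < 2 ^ (2 * (n - 1)))%N by apply: ltn_expl.
rewrite expnM in e2.
have e3 : (2 ^ 2 = 4)%N by [].
rewrite e3 in e2.
have : (m <= n - 1)%N by rewrite /m; lia.
move: e1 e2 hk1; generalize (4 ^ (n - 1))%N (4 ^ k)%N => a b; lia.
Qed.
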